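(* Let $(G,+)$ be a metrizable abelian topological group and $\phi:G\to G$, $\phi(x)=-x$. Then the abstract HNN extension $H=\langle G,t\mid txt^{-1}=-x,\ x\in G\rangle$ admits a metrizable SIN group topology extending the topology of $G$ (i.e. with $G$ a topological subgroup of $H$).
   Context: A topological group is SIN if every neighborhood of the identity contains a neighborhood $V$ of the identity with $gVg^{-1}=V$ for all $g$. *)

(* Defs.v *)
From Stdlib Require Import Reals.
Local Open Scope R_scope.

Record Group : Type := {
  gcar :> Type;
  gmul : gcar -> gcar -> gcar;
  ginv : gcar -> gcar;
  gone : gcar;
  gmul_assoc : forall x y z, gmul x (gmul y z) = gmul (gmul x y) z;
  gmul_1l : forall x, gmul gone x = x;
  gmul_Vl : forall x, gmul (ginv x) x = gone
}.

Arguments gmul {g}.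
Arguments ginv {g}.
Arguments gone {g}.

Definition abelian (G : Group) : Prop := forall x y : G, gmul x y = gmul y x.

Definition is_hom (G K : Group) (f : G -> K) : Prop :=
  forall x y : G, f (gmul x y) = gmul (f x) (f y).

(** Abstract HNN extension H = < G, t | t x t^-1 = phi x (x in G) >,
    phi an automorphism of G, characterised by the universal property of
    the presentation: iota : G -> H is a homomorphism, the relations hold,
    and for every group K, every homomorphism f : G -> K and every k in K
    with k f(x) k^-1 = f(phi x), there is a unique homomorphism h : H -> K
    with h o iota = f and h t = k. *)
Definition is_HNN_extension (G H : Group) (phi : G -> G)
    (iota : G -> H) (t : H) : Prop :=
  is_hom G H iota /\
  (forall x : G, gmul (gmul t (iota x)) (ginv t) = iota (phi x)) /\
  (forall (K : Group) (f : G -> K) (k : K),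
     is_hom G K f ->
     (forall x : G, gmul (gmul k (f x)) (ginv k) = f (phi x)) ->
     exists h : H -> K,
       is_hom H K h /\ (forall x : G, h (iota x) = f x) /\ h t = k /\
       (forall h' : H -> K, is_hom H K h' -> (forall x : G, h' (iota x) = f x) ->
          h' t = k -> forall y : H, h' y = h y)).

Definition is_topology (X : Type) (op : (X -> Prop) -> Prop) : Prop :=
  op (fun _ => True) /\
  (forall U V, op U -> op V -> op (fun x => U x /\ V x)) /\
  (forall F : (X -> Prop) -> Prop, (forall U, F U -> op U) ->
     op (fun x => exists U, F U /\ U x)).

Definition prod_open (X Y : Type) (opX : (X -> Prop) -> Prop)
    (opY : (Y -> Prop) -> Prop) (W : X * Y -> Prop) : Prop :=
  forall p, W p -> exists A B, opX A /\ opY B /\ A (fst p) /\ B (snd p) /\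
     (forall x y, A x -> B y -> W (x, y)).

Definition continuous (X Y : Type) (opX : (X -> Prop) -> Prop)
    (opY : (Y -> Prop) -> Prop) (f : X -> Y) : Prop :=
  forall V, opY V -> opX (fun x => V (f x)).

Definition is_topological_group (G : Group) (op : (G -> Prop) -> Prop) : Prop :=
  is_topology G op /\
  continuous (G * G) G (prod_open G G op op) op (fun p => gmul (fst p) (snd p)) /\
  continuous G G op op (fun x => ginv x).

Definition is_metric (X : Type) (d : X -> X -> R) : Prop :=
  (forall x y, 0 <= d x y) /\ (forall x y, d x y = 0 <-> x = y) /\
  (forall x y, d x y = d y x) /\ (forall x y z, d x z <= d x y + d y z).

Definition metrizable (X : Type) (op : (X -> Prop) -> Prop) : Prop :=
  exists d : X -> X -> R, is_metric X d /\
    forall U, op U <-> (forall x, U x -> exists eps, 0 < eps /\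
                          forall y, d x y < eps -> U y).

Definition nbhd1 (G : Group) (op : (G -> Prop) -> Prop) (N : G -> Prop) : Prop :=
  exists U, op U /\ U gone /\ forall x, U x -> N x.

Definition is_SIN_group (G : Group) (op : (G -> Prop) -> Prop) : Prop :=
  forall N, nbhd1 G op N ->
    exists V, nbhd1 G op V /\ (forall x, V x -> N x) /\
      forall (g : G) (y : G),
        (exists v, V v /\ y = gmul (gmul g v) (ginv g)) <-> V y.

(* Main.v *)
Require Import Defs.
From Stdlib Require Import Reals Lra Lia ZArith.

Infix "**" := gmul (at level 40, left associativity).

Lemma mulVr (K : Group) (x : K) : x ** ginv x = gone.
Proof.
  rewrite <- (gmul_1l K (x ** ginv x)).
  rewrite <- (gmul_Vl K (ginv x)) at 1.
  rewrite <- gmul_assoc, (gmul_assoc K (ginv x) x), gmul_Vl, gmul_1l.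
  apply gmul_Vl.
Qed.

Lemma mul1r (K : Group) (x : K) : x ** gone = x.
Proof. rewrite <- (gmul_Vl K x), gmul_assoc, mulVr, gmul_1l. reflexivity. Qed.

Lemma mulKV (K : Group) (x y : K) : ginv x ** (x ** y) = y.
Proof. rewrite gmul_assoc, gmul_Vl, gmul_1l. reflexivity. Qed.

Lemma mulKr (K : Group) (x y : K) : x ** (ginv x ** y) = y.
Proof. rewrite gmul_assoc, mulVr, gmul_1l. reflexivity. Qed.

Lemma inv_uniq (K : Group) (x y : K) : x ** y = gone -> y = ginv x.
Proof. intros E. rewrite <- (mulKV K x y), E, mul1r. reflexivity. Qed.

Lemma invK (K : Group) (x : K) : ginv (ginv x) = x.
Proof. symmetry. apply inv_uniq. apply gmul_Vl. Qed.

Lemma inv1 (K : Group) : ginv (@gone K) = gone.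
Proof. symmetry. apply inv_uniq. apply gmul_1l. Qed.

Lemma invM (K : Group) (x y : K) : ginv (x ** y) = ginv y ** ginv x.
Proof.
  symmetry. apply inv_uniq.
  rewrite gmul_assoc, <- (gmul_assoc K x y), mulVr, mul1r, mulVr. reflexivity.
Qed.

Lemma mul_cancel_l (K : Group) (a x y : K) : a ** x = a ** y -> x = y.
Proof. intros E. rewrite <- (mulKV K a x), E, mulKV. reflexivity. Qed.

Lemma hom1 (K L : Group) (f : K -> L) : is_hom K L f -> f gone = gone.
Proof.
  intros Hf. apply (mul_cancel_l L (f gone)).
  rewrite <- Hf, gmul_1l, mul1r. reflexivity.
Qed.

Lemma homV (K L : Group) (f : K -> L) : is_hom K L f -> forall x, f (ginv x) = ginv (f x).
Proof.
  intros Hf x. apply inv_uniq. rewrite <- Hf, mulVr. apply (hom1 K L f Hf).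
Qed.

Definition zpow (K : Group) (k : K) (m : Z) : K :=
  match m with
  | Z0 => gone
  | Zpos p => Pos.iter (fun y => y ** k) gone p
  | Zneg p => Pos.iter (fun y => y ** ginv k) gone p
  end.

Lemma zpow_succ (K : Group) (k : K) m : zpow K k (Z.succ m) = zpow K k m ** k.
Proof.
  destruct m as [|p|p].
  - simpl. reflexivity.
  - replace (Z.succ (Zpos p)) with (Zpos (Pos.succ p)) by lia. simpl.
    rewrite Pos.iter_succ. reflexivity.
  - destruct (Pos.succ_pred_or p) as [->|E].
    + simpl. rewrite gmul_1l, gmul_Vl. reflexivity.
    + rewrite <- E. replace (Z.succ (Zneg (Pos.succ (Pos.pred p)))) with (Zneg (Pos.pred p)) by lia.
      simpl. rewrite Pos.iter_succ, <- gmul_assoc, gmul_Vl, mul1r. reflexivity.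
Qed.

Lemma zpow_pred (K : Group) (k : K) m : zpow K k (Z.pred m) = zpow K k m ** ginv k.
Proof.
  rewrite <- (Z.succ_pred m) at 2. rewrite zpow_succ, <- gmul_assoc, mulVr, mul1r.
  reflexivity.
Qed.

Lemma zpow_add (K : Group) (k : K) m n : zpow K k (m + n) = zpow K k m ** zpow K k n.
Proof.
  induction n using Z.peano_ind.
  - rewrite Z.add_0_r, mul1r. reflexivity.
  - rewrite Z.add_succ_r, !zpow_succ, IHn, gmul_assoc. reflexivity.
  - rewrite Z.add_pred_r, !zpow_pred, IHn, gmul_assoc. reflexivity.
Qed.

Lemma hom_zpow (K L : Group) (f : K -> L) (k : K) : is_hom K L f ->
  forall m, f (zpow K k m) = zpow L (f k) m.
Proof.
  intros Hf m. induction m using Z.peano_ind.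
  - apply (hom1 K L f Hf).
  - rewrite !zpow_succ, Hf, IHm. reflexivity.
  - rewrite !zpow_pred, Hf, IHm, (homV K L f Hf). reflexivity.
Qed.

Definition sgn (G : Group) (m : Z) (y : G) : G := if Z.odd m then ginv y else y.

Lemma sgnM (G : Group) (Hab : abelian G) m (a b : G) : sgn G m (a ** b) = sgn G m a ** sgn G m b.
Proof. unfold sgn; destruct (Z.odd m); [rewrite invM; apply Hab | reflexivity]. Qed.

Lemma sgn_sgn (G : Group) m n (z : G) : sgn G m (sgn G n z) = sgn G (m + n) z.
Proof. unfold sgn. rewrite Z.odd_add. destruct (Z.odd m), (Z.odd n); simpl; rewrite ?invK; reflexivity. Qed.

Lemma sgn1 (G : Group) m : sgn G m gone = gone.
Proof. unfold sgn; destruct (Z.odd m); [apply inv1|reflexivity]. Qed.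

Lemma sgnV (G : Group) m (x : G) : sgn G m (ginv x) = ginv (sgn G m x).
Proof. unfold sgn; destruct (Z.odd m); reflexivity. Qed.

Lemma sgn_inv_l (G : Group) m (x : G) : sgn G m (sgn G m x) = x.
Proof. unfold sgn; destruct (Z.odd m); rewrite ?invK; reflexivity. Qed.

Definition Smul (G : Group) (p q : G * Z) : G * Z :=
  (fst p ** sgn G (snd p) (fst q), (snd p + snd q)%Z).
Definition Sinv (G : Group) (p : G * Z) : G * Z := (sgn G (snd p) (ginv (fst p)), (- snd p)%Z).
Definition Sone (G : Group) : G * Z := (gone, 0%Z).

Lemma S_assoc (G : Group) (Hab : abelian G) (x y z : G * Z) :
  Smul G x (Smul G y z) = Smul G (Smul G x y) z.
Proof.
  destruct x as [x m], y as [y n], z as [z k]; unfold Smul; simpl.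
  f_equal; [|lia].
  rewrite sgnM, sgn_sgn, gmul_assoc by exact Hab. reflexivity.
Qed.

Lemma S_1l (G : Group) (x : G * Z) : Smul G (Sone G) x = x.
Proof. destruct x as [x m]; unfold Smul, Sone; simpl. rewrite gmul_1l. reflexivity. Qed.

Lemma S_Vl (G : Group) (x : G * Z) : Smul G (Sinv G x) x = Sone G.
Proof.
  destruct x as [x m]; unfold Smul, Sinv, Sone, sgn; simpl. f_equal; [|lia].
  rewrite Z.odd_opp. destruct (Z.odd m); rewrite ?invK; [apply mulVr|apply gmul_Vl].
Qed.

Definition SG (G : Group) (Hab : abelian G) : Group :=
  {| gcar := (G * Z)%type; gmul := Smul G; ginv := Sinv G; gone := Sone G;
     gmul_assoc := S_assoc G Hab; gmul_1l := S_1l G; gmul_Vl := S_Vl G |}.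

Lemma SG_conj (G : Group) (Hab : abelian G) (z x : G) m :
  @gmul (SG G Hab) (@gmul (SG G Hab) (z, m) (x, 0%Z)) (@ginv (SG G Hab) (z, m)) = (sgn G m x, 0%Z).
Proof.
  simpl. unfold Smul, Sinv; simpl. f_equal; [|lia].
  rewrite sgn_sgn, Z.add_0_r.
  change (sgn G (m + m) (ginv z)) with (if Z.odd (m+m) then ginv (ginv z) else ginv z).
  rewrite Z.odd_add. rewrite Bool.xorb_nilpotent.
  simpl. rewrite (Hab z), <- gmul_assoc, mulVr, mul1r. reflexivity.
Qed.

Lemma SG_zpow (G : Group) (Hab : abelian G) m :
  zpow (SG G Hab) (gone, 1%Z) m = (gone, m).
Proof.
  induction m using Z.peano_ind.
  - reflexivity.
  - rewrite zpow_succ, IHm. simpl. unfold Smul; simpl. rewrite sgn1, gmul_1l.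
    f_equal; lia.
  - rewrite zpow_pred, IHm. simpl. unfold Smul, Sinv; simpl.
    unfold sgn; simpl. rewrite !inv1, gmul_1l. destruct (Z.odd m); f_equal; lia.
Qed.

Lemma conj_zpow (G H : Group) (iota : G -> H) (t : H) :
  is_hom G H iota ->
  (forall x : G, gmul (gmul t (iota x)) (ginv t) = iota (ginv x)) ->
  forall m y, zpow H t m ** iota y = iota (sgn G m y) ** zpow H t m.
Proof.
  intros Hi Hr.
  assert (R1 : forall y, t ** iota y = iota (ginv y) ** t).
  { intros y. rewrite <- Hr, <- gmul_assoc, gmul_Vl, mul1r. reflexivity. }
  assert (R2 : forall y, ginv t ** iota y = iota (ginv y) ** ginv t).
  { intros y. rewrite <- (invK G y) at 1. rewrite <- Hr, !gmul_assoc, gmul_Vl, gmul_1l. reflexivity. }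
  intros m. induction m using Z.peano_ind; intros y.
  - simpl. unfold sgn; simpl. rewrite gmul_1l, mul1r. reflexivity.
  - rewrite zpow_succ, <- gmul_assoc, R1, gmul_assoc, IHm, <- gmul_assoc.
    f_equal. f_equal. unfold sgn. rewrite Z.odd_succ, <- Z.negb_odd.
    destruct (Z.odd m); simpl; rewrite ?invK; reflexivity.
  - rewrite zpow_pred, <- gmul_assoc, R2, gmul_assoc, IHm, <- gmul_assoc.
    f_equal. f_equal. unfold sgn. rewrite Z.odd_pred, <- Z.negb_odd.
    destruct (Z.odd m); simpl; rewrite ?invK; reflexivity.
Qed.

Lemma HNN_iso (G : Group) (Hab : abelian G) (H : Group) (iota : G -> H) (t : H)
  (HHNN : is_HNN_extension G H (fun x => ginv x) iota t) :
  exists h : H -> SG G Hab, is_hom H (SG G Hab) h /\ (forall x, h (iota x) = (x, 0%Z)) /\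
    (forall a b, h a = h b -> a = b).
Proof.
  destruct HHNN as [Hi [Hr Hu]].
  destruct (Hu (SG G Hab) (fun x => (x, 0%Z)) (gone, 1%Z)) as [h [Hh [Hhi [Hht _]]]].
  { intros x y. simpl. unfold Smul; simpl. reflexivity. }
  { intros x. rewrite SG_conj. reflexivity. }
  exists h. split; [exact Hh|]. split; [exact Hhi|].
  set (g := fun p : SG G Hab => iota (fst p) ** zpow H t (snd p)).
  assert (Hg : is_hom (SG G Hab) H g).
  { intros [x m] [y n]. unfold g; simpl. unfold Smul; simpl.
    rewrite zpow_add, Hi, !gmul_assoc. f_equal.
    rewrite <- !gmul_assoc. f_equal. symmetry. apply (conj_zpow G H iota t Hi Hr). }
  assert (Hgh : forall y, g (h y) = y).
  { destruct (Hu H iota t Hi Hr) as [h0 [_ [_ [_ U]]]].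
    intros y. rewrite (U (fun y => y)), (U (fun y => g (h y))); try reflexivity.
    - intros a b. rewrite Hh, Hg. reflexivity.
    - intros x. rewrite Hhi. unfold g; simpl. apply mul1r.
    - rewrite Hht. unfold g; simpl. rewrite gmul_1l, (hom1 G H iota Hi), gmul_1l. reflexivity.
    - intros a b. reflexivity. }
  intros a b E. rewrite <- (Hgh a), <- (Hgh b), E. reflexivity.
Qed.
Open Scope R_scope.

Lemma ball_open (X : Type) (d : X -> X -> R) (op : (X -> Prop) -> Prop) :
  is_metric X d ->
  (forall U, op U <-> (forall x, U x -> exists eps, 0 < eps /\ forall y, d x y < eps -> U y)) ->
  forall x r, op (fun y => d x y < r).
Proof.
  intros [_ [_ [_ Htr]]] Hop x r. apply Hop. intros y Hy.
  exists (r - d x y). split; [lra|]. intros z Hz. pose proof (Htr x y z). lra.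
Qed.


Lemma metric_cont_mul (G : Group) opG dG :
  is_metric G dG ->
  (forall U, opG U <-> (forall x, U x -> exists eps, 0 < eps /\ forall y, dG x y < eps -> U y)) ->
  continuous (G * G) G (prod_open G G opG opG) opG (fun p => gmul (fst p) (snd p)) ->
  forall x y eps, 0 < eps -> exists del, 0 < del /\ forall x' y',
    dG x x' < del -> dG y y' < del -> dG (x ** y) (x' ** y') < eps.
Proof.
  intros Hm Hop Hc x y eps Heps.
  pose proof (Hc _ (ball_open G dG opG Hm Hop (x ** y) eps)) as P.
  destruct (P (x, y)) as [A [B [HA [HB [Ax [By HAB]]]]]].
  { simpl. destruct Hm as [_ [Hz _]]. rewrite (proj2 (Hz _ _) eq_refl). exact Heps. }
  destruct (proj1 (Hop A) HA x Ax) as [e1 [He1 H1]].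
  destruct (proj1 (Hop B) HB y By) as [e2 [He2 H2]].
  exists (Rmin e1 e2). split; [apply Rmin_glb_lt; lra|].
  intros x' y' D1 D2. apply (HAB x' y').
  - apply H1. pose proof (Rmin_l e1 e2). lra.
  - apply H2. pose proof (Rmin_r e1 e2). lra.
Qed.

Lemma metric_cont_inv (G : Group) opG dG :
  is_metric G dG ->
  (forall U, opG U <-> (forall x, U x -> exists eps, 0 < eps /\ forall y, dG x y < eps -> U y)) ->
  continuous G G opG opG (fun x => ginv x) ->
  forall x eps, 0 < eps -> exists del, 0 < del /\ forall x',
    dG x x' < del -> dG (ginv x) (ginv x') < eps.
Proof.
  intros Hm Hop Hc x eps Heps.
  pose proof (Hc _ (ball_open G dG opG Hm Hop (ginv x) eps)) as P.
  destruct (proj1 (Hop _) P x) as [e1 [He1 H1]].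
  { simpl. destruct Hm as [_ [Hz _]]. rewrite (proj2 (Hz _ _) eq_refl). exact Heps. }
  exists e1. split; [exact He1|]. exact H1.
Qed.

Definition dS (G : Group) (dG : G -> G -> R) (p q : G * Z) : R :=
  dG (fst p) (fst q) + (if Z.eq_dec (snd p) (snd q) then 0 else 1).

Lemma dS_metric (G : Group) dG : is_metric G dG -> is_metric (G * Z) (dS G dG).
Proof.
  intros [H0 [Hz [Hs Ht]]]. unfold dS. split; [|split; [|split]].
  - intros [x m] [y n]; simpl. pose proof (H0 x y). destruct (Z.eq_dec m n); lra.
  - intros [x m] [y n]; simpl. split.
    + intros E. pose proof (H0 x y). destruct (Z.eq_dec m n).
      * subst. f_equal. apply Hz. lra.
      * lra.
    + intros E. injection E as -> ->. destruct (Z.eq_dec n n); [|congruence].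
      rewrite (proj2 (Hz y y) eq_refl). lra.
  - intros [x m] [y n]; simpl. rewrite Hs.
    destruct (Z.eq_dec m n), (Z.eq_dec n m); try lra; lia.
  - intros [x m] [y n] [z k]; simpl. pose proof (Ht x y z).
    pose proof (H0 x y). pose proof (H0 y z).
    destruct (Z.eq_dec m k), (Z.eq_dec m n), (Z.eq_dec n k); try lra; lia.
Qed.

Lemma dS_small (G : Group) dG (H0 : forall x y, 0 <= dG x y) p q :
  dS G dG p q < 1 -> snd p = snd q /\ dS G dG p q = dG (fst p) (fst q).
Proof.
  unfold dS. intros Hl. pose proof (H0 (fst p) (fst q)).
  destruct (Z.eq_dec (snd p) (snd q)); [split; [auto|lra]|lra].
Qed.

Lemma sgn_cont (G : Group) dG :
  (forall x eps, 0 < eps -> exists del, 0 < del /\ forall x',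
    dG x x' < del -> dG (ginv x) (ginv x') < eps) ->
  forall m x eps, 0 < eps -> exists del, 0 < del /\ forall x',
    dG x x' < del -> dG (sgn G m x) (sgn G m x') < eps.
Proof.
  intros IC m x eps Heps. unfold sgn. destruct (Z.odd m).
  - apply IC; auto.
  - exists eps; auto.
Qed.

Theorem mainTheorem16 (G : Group) (opG : (G -> Prop) -> Prop)
  (HGab : abelian G) (HGtop : is_topological_group G opG)
  (HGmet : metrizable G opG)
  (H : Group) (iota : G -> H) (t : H)
  (HHNN : is_HNN_extension G H (fun x => ginv x) iota t) :
  exists opH : (H -> Prop) -> Prop,
    is_topological_group H opH /\ metrizable H opH /\ is_SIN_group H opH /\
    (forall x y : G, iota x = iota y -> x = y) /\
    (forall U : G -> Prop,
       opG U <-> exists W, opH W /\ forall x : G, U x <-> W (iota x)).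
Proof.
  destruct HGmet as [dG [Hm HopG]].
  destruct HGtop as [_ [Hmulc Hinvc]].
  pose proof (metric_cont_mul G opG dG Hm HopG Hmulc) as MC.
  pose proof (metric_cont_inv G opG dG Hm HopG Hinvc) as IC.
  pose proof (sgn_cont G dG IC) as SC.
  destruct (HNN_iso G HGab H iota t HHNN) as [h [Hh [Hhi Hinj]]].
  pose proof (dS_metric G dG Hm) as HmS.
  assert (H0 : forall x y, 0 <= dG x y) by apply Hm.
  assert (Hd0 : forall x, dG x x = 0) by (intros; apply Hm; reflexivity).
  set (dH := fun a b : H => dS G dG (h a) (h b)).
  assert (HmH : is_metric H dH).
  { destruct HmS as [A1 [A2 [A3 A4]]]. unfold dH. split; [|split;[|split]]; intros.
    - apply A1.
    - split; intros E. apply Hinj, A2, E. subst; apply A2; reflexivity.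
    - apply A3.
    - apply A4. }
  assert (HdH0 : forall a, dH a a = 0) by (intros; apply HmH; reflexivity).
  set (opH := fun W : H -> Prop => forall a, W a -> exists eps, 0 < eps /\ forall b, dH a b < eps -> W b).
  assert (HopH : forall U, opH U <-> (forall x, U x -> exists eps, 0<eps /\ forall y, dH x y < eps -> U y)) by (intros; reflexivity).
  pose proof (ball_open H dH opH HmH HopH) as BH.
  assert (MS : forall P Q eps, 0 < eps -> exists del, 0 < del /\ forall P' Q',
     dS G dG P P' < del -> dS G dG Q Q' < del -> dS G dG (Smul G P Q) (Smul G P' Q') < eps).
  { intros [x m] [y n] eps Heps.
    destruct (MC x (sgn G m y) eps Heps) as [d1 [Hd1 P1]].
    destruct (SC m y d1 Hd1) as [d2 [Hd2 P2]].
    exists (Rmin (Rmin d1 d2) 1). split. { apply Rmin_glb_lt; [apply Rmin_glb_lt|]; lra. }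
    assert (R1 := Rmin_l (Rmin d1 d2) 1). assert (R2 := Rmin_r (Rmin d1 d2) 1).
    assert (R3 := Rmin_l d1 d2). assert (R4 := Rmin_r d1 d2).
    intros [x' m'] [y' n'] D1 D2.
    destruct (dS_small G dG H0 (x, m) (x', m')) as [E1 F1]; [lra|].
    destruct (dS_small G dG H0 (y, n) (y', n')) as [E2 F2]; [lra|].
    simpl in E1, F1, E2, F2. subst m' n'.
    unfold Smul, dS; simpl. destruct (Z.eq_dec (m + n) (m + n)); [|congruence].
    rewrite Rplus_0_r. apply P1. lra. apply P2. lra. }
  assert (IS : forall P eps, 0 < eps -> exists del, 0 < del /\ forall P',
     dS G dG P P' < del -> dS G dG (Sinv G P) (Sinv G P') < eps).
  { intros [x m] eps Heps.
    destruct (SC m (ginv x) eps Heps) as [d1 [Hd1 P1]].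
    destruct (IC x d1 Hd1) as [d2 [Hd2 P2]].
    exists (Rmin d2 1). split. { apply Rmin_glb_lt; lra. }
    assert (R1 := Rmin_l d2 1). assert (R2 := Rmin_r d2 1).
    intros [x' m'] D1.
    destruct (dS_small G dG H0 (x, m) (x', m')) as [E1 F1]; [lra|].
    simpl in E1, F1. subst m'.
    unfold Sinv, dS; simpl. destruct (Z.eq_dec (- m) (- m)); [|congruence].
    rewrite Rplus_0_r. apply P1, P2. lra. }
  exists opH. split; [|split; [|split; [|split]]].
  -
    split; [|split].
    + split; [|split].
      * intros a _. exists 1. split; [lra|]. auto.
      * intros U V HU HV a [Ua Va].
        destruct (HU a Ua) as [e1 [He1 P1]]. destruct (HV a Va) as [e2 [He2 P2]].
        exists (Rmin e1 e2). split; [apply Rmin_glb_lt; lra|].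
        assert (R1 := Rmin_l e1 e2). assert (R2 := Rmin_r e1 e2).
        intros b Hb. split; [apply P1|apply P2]; lra.
      * intros F HF a [U [FU Ua]]. destruct (HF U FU a Ua) as [e [He P]].
        exists e. split; [exact He|]. intros b Hb. exists U. split; auto.
    + intros V HV [a b] Vab. simpl in Vab.
      destruct (HV _ Vab) as [e [He Pe]].
      destruct (MS (h a) (h b) e He) as [d [Hd Pd]].
      exists (fun a' => dH a a' < d), (fun b' => dH b b' < d).
      split; [apply BH|]. split; [apply BH|]. simpl.
      split; [rewrite HdH0; exact Hd|]. split; [rewrite HdH0; exact Hd|].
      intros x y Ax By. simpl. apply Pe. unfold dH. rewrite !Hh. apply Pd; auto.
    + intros V HV a Va.
      destruct (HV _ Va) as [e [He Pe]].
      destruct (IS (h a) e He) as [d [Hd Pd]].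
      exists d. split; [exact Hd|]. intros b Hb. apply Pe.
      unfold dH. rewrite !(homV _ _ h Hh). apply Pd; auto.
  - exists dH. split; [exact HmH|exact HopH].
  -
    intros N [U [HU [U1 UN]]].
    destruct (HU gone U1) as [eps [Heps Peps]].
    set (e := Rmin eps 1).
    assert (Re1 : e <= eps) by apply Rmin_l. assert (Re2 : e <= 1) by apply Rmin_r.
    assert (He : 0 < e) by (apply Rmin_glb_lt; lra).
    set (V := fun b : H => snd (h b) = 0%Z /\ dG gone (fst (h b)) < e /\ dG gone (ginv (fst (h b))) < e).
    assert (h1 : h gone = (gone, 0%Z)) by exact (hom1 _ _ h Hh).
    assert (Fwd : forall g v, V v -> V (g ** v ** ginv g)).
    { intros g v [Ev [D1 D2]]. unfold V.
      rewrite !Hh, (homV _ _ h Hh).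
      destruct (h v) as [x m0]; simpl in Ev, D1, D2; subst m0.
      destruct (h g) as [z m].
      rewrite (SG_conj G HGab z x m). simpl. unfold sgn. destruct (Z.odd m).
      - rewrite invK. auto.
      - auto. }
    exists V. split; [|split].
    + exists V. split; [|split; [|auto]].
      * intros b [Eb [D1 D2]].
        destruct (IC (fst (h b)) (e - dG gone (ginv (fst (h b))))) as [d1 [Hd1 P1]]; [lra|].
        exists (Rmin (Rmin d1 1) (e - dG gone (fst (h b)))).
        assert (R1 := Rmin_l (Rmin d1 1) (e - dG gone (fst (h b)))).
        assert (R2 := Rmin_r (Rmin d1 1) (e - dG gone (fst (h b)))).
        assert (R3 := Rmin_l d1 1). assert (R4 := Rmin_r d1 1).
        split. { apply Rmin_glb_lt; [apply Rmin_glb_lt|]; lra. }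
        intros b' Hb'. unfold dH in Hb'.
        destruct (dS_small G dG H0 (h b) (h b')) as [E1 F1]; [lra|].
        destruct Hm as [_ [_ [_ Htr]]].
        split; [congruence|]. split.
        -- pose proof (Htr gone (fst (h b)) (fst (h b'))). lra.
        -- pose proof (Htr gone (ginv (fst (h b))) (ginv (fst (h b')))).
           pose proof (P1 (fst (h b'))). lra.
      * unfold V. rewrite h1. simpl. rewrite inv1, Hd0. auto.
    + intros b [Eb [D1 D2]]. apply UN, Peps. unfold dH, dS. rewrite h1, Eb. simpl.
      lra.
    + intros g y. split.
      * intros [v [Vv ->]]. apply Fwd, Vv.
      * intros Vy. exists (ginv g ** y ** ginv (ginv g)). split; [apply Fwd, Vy|].
        rewrite invK, !gmul_assoc, mulVr, gmul_1l, <- gmul_assoc, mulVr, mul1r. reflexivity.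
  - intros x y E. assert (E' := f_equal h E). rewrite !Hhi in E'. congruence.
  - intros U. split.
    + intros HU. exists (fun b => snd (h b) = 0%Z /\ U (fst (h b))). split.
      * intros b [Eb Ub]. destruct (proj1 (HopG U) HU _ Ub) as [e [He Pe]].
        exists (Rmin e 1). split; [apply Rmin_glb_lt; lra|].
        assert (R1 := Rmin_l e 1). assert (R2 := Rmin_r e 1).
        intros b' Hb'. unfold dH in Hb'.
        destruct (dS_small G dG H0 (h b) (h b')) as [E1 F1]; [lra|].
        split; [congruence|]. apply Pe. lra.
      * intros x. rewrite Hhi. simpl. tauto.
    + intros [W [HW HUW]]. apply HopG. intros x Ux.
      destruct (HW (iota x) (proj1 (HUW x) Ux)) as [e [He Pe]].
      exists e. split; [exact He|]. intros y Hy. apply HUW, Pe.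
      unfold dH, dS. rewrite !Hhi. simpl. destruct (Z.eq_dec 0 0); [|congruence]. lra.
Qed.
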